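(* Let $\Gamma\subseteq A$ be $\Bbbk$-algebras, $\sim$ an equivalence relation on $\mathrm{cfs}(\Gamma)$, and suppose $\Gamma$ is a Harish-Chandra block subalgebra of $A$ with respect to $\sim$. Let $V$ be an $A$-module and $v\in V$ with $\mathfrak m_1\cdots\mathfrak m_kv=0$, where $B\in\mathrm{cfs}(\Gamma)/{\sim}$ and $\mathfrak m_1,\dots,\mathfrak m_k\in B$. Then $$Av\subseteq\bigoplus_{C\in\bigcup_{i}\mathrm{Supp}(A/A\mathfrak m_i)}V(C).$$
   Context: $\mathrm{cfs}(\Gamma)$: maximal two-sided ideals $\mathfrak m$ of $\Gamma$ with $\dim\Gamma/\mathfrak m<\infty$. For a class $B$, $\mathcal W(B)=\{\mathfrak m_1\cdots\mathfrak m_k:k\ge0,\mathfrak m_i\in B\}$; for a $\Gamma$-module $V$, $V(B)=\{v:\mathfrak m v=0$ for some $\mathfrak m\in\mathcal W(B)\}$ (these sum directly). $V$ is a block module if $V=\bigoplus_BV(B)$; $\mathrm{Supp}(V)=\{B:V(B)\neq0\}$. $\Gamma$ is a Harish-Chandra block subalgebra of $A$ if the left $A$-module $A/A\mathfrak m$ is a block module over $\Gamma$ for every $B$ and every $\mathfrak m\in\mathcal W(B)$. *)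

(* Defs.v *)
From HB Require Import structures.
From mathcomp Require Import all_boot all_order all_algebra.
From Stdlib Require List.
Set Implicit Arguments. Unset Strict Implicit. Unset Printing Implicit Defensive.
Import GRing.Theory.
Local Open Scope ring_scope.

(* Subsets are predicates in Prop. The subalgebra Gamma of A is a subset
   G : A -> Prop closed under the algebra operations; ideals of Gamma are
   subsets of A contained in G. *)

Section Defs.
Variables (k : fieldType) (A : algType k).

Definition is_subalg (G : A -> Prop) : Prop :=
  [/\ G 1, (forall x y, G x -> G y -> G (x - y)),
      (forall (c : k) x, G x -> G (c *: x)) &
      (forall x y, G x -> G y -> G (x * y))].

Definition is_ideal (G I : A -> Prop) : Prop :=
  [/\ (forall x, I x -> G x), I 0,
      (forall x y, I x -> I y -> I (x - y)),
      (forall g x, G g -> I x -> I (g * x)) &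
      (forall g x, G g -> I x -> I (x * g))].

Definition is_maximal_ideal (G I : A -> Prop) : Prop :=
  [/\ is_ideal G I, (exists g, G g /\ ~ I g) &
      (forall J, is_ideal G J -> (forall x, I x -> J x) ->
         (forall x, J x <-> I x) \/ (forall x, J x <-> G x))].

Definition fin_codim (G I : A -> Prop) : Prop :=
  exists s : seq A, (forall i, (i < size s)%N -> G s`_i) /\
    forall x, G x -> exists c : 'I_(size s) -> k,
      I (x - \sum_(i < size s) c i *: s`_i).

Definition cfs (G : A -> Prop) (m : A -> Prop) : Prop :=
  is_maximal_ideal G m /\ fin_codim G m.

Definition equiv_on_cfs (G : A -> Prop) (eqv : (A -> Prop) -> (A -> Prop) -> Prop) :=
  [/\ (forall m, cfs G m -> eqv m m),
      (forall m n, cfs G m -> cfs G n -> eqv m n -> eqv n m) &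
      (forall m n p, cfs G m -> cfs G n -> cfs G p -> eqv m n -> eqv n p -> eqv m p)].

(* B is an element of cfs(Gamma)/~ (an equivalence class) *)
Definition is_block (G : A -> Prop) eqv (B : (A -> Prop) -> Prop) : Prop :=
  exists m0, cfs G m0 /\ forall m, B m <-> (cfs G m /\ eqv m0 m).

(* product of subsets I J : the set of finite sums of products a*b,
   a in I, b in J (the ideal product I J; with I = A it is the left ideal A J) *)
Definition idealMul (I J : A -> Prop) : A -> Prop :=
  fun x => exists (n : nat) (a b : 'I_n -> A),
    (forall i, I (a i)) /\ (forall i, J (b i)) /\ x = \sum_(i < n) a i * b i.

(* m_1 ... m_k as an ideal of Gamma (empty product = Gamma) *)
Definition prodIdeal (G : A -> Prop) (ms : seq (A -> Prop)) : A -> Prop :=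
  foldr idealMul G ms.

Definition Wset (G : A -> Prop) (B : (A -> Prop) -> Prop) (n : A -> Prop) : Prop :=
  exists ms : seq (A -> Prop), (forall m, List.In m ms -> B m) /\ n = prodIdeal G ms.

(* For an A-module M and a submodule N, the notions below concern the
   Gamma-module M/N, phrased on representatives:
   (M/N)(B) = { [v] | n v  is contained in N for some n in W(B) }. *)
Definition QPart (M : lmodType A) (G : A -> Prop) (N : M -> Prop)
  (B : (A -> Prop) -> Prop) (v : M) : Prop :=
  exists n, Wset G B n /\ forall x, n x -> N (x *: v).

Definition BlockModule (M : lmodType A) (G : A -> Prop) eqv (N : M -> Prop) : Prop :=
  forall v : M, exists r : seq (M * ((A -> Prop) -> Prop)),
    (forall p, List.In p r -> is_block G eqv p.2 /\ QPart G N p.2 p.1) /\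
    N (v - \sum_(p <- r) p.1).

Definition Supp (M : lmodType A) (G : A -> Prop) (N : M -> Prop)
  (B : (A -> Prop) -> Prop) : Prop :=
  exists v : M, ~ N v /\ QPart G N B v.

Definition HC_block_subalg (G : A -> Prop) eqv : Prop :=
  forall B, is_block G eqv B -> forall n, Wset G B n ->
    BlockModule (M := A^o) G eqv (idealMul (fun _ => True) n).

End Defs.

(* Main.v *)
Require Import Defs.
From HB Require Import structures.
From mathcomp Require Import all_boot all_order all_algebra.
From Stdlib Require List.
From Stdlib Require Import Classical FunctionalExtensionality PropExtensionality.
Import GRing.Theory.
Set Implicit Arguments. Unset Strict Implicit.
Local Open Scope ring_scope.

Section Aux.
Variables (k : fieldType) (A : algType k).
Implicit Types (I J K : A -> Prop).

Lemma iM0 I J : idealMul I J 0.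
Proof. exists 0%N, (fun _ => 0), (fun _ => 0); split; [|split]; try by case.
by rewrite big_ord0. Qed.

Lemma iMD I J x y : idealMul I J x -> idealMul I J y -> idealMul I J (x + y).
Proof.
move=> [n1 [a1 [b1 [Ha1 [Hb1 ->]]]]] [n2 [a2 [b2 [Ha2 [Hb2 ->]]]]].
exists (n1 + n2)%N,
  (fun i => match split i with inl i1 => a1 i1 | inr i2 => a2 i2 end),
  (fun i => match split i with inl i1 => b1 i1 | inr i2 => b2 i2 end).
split; [|split].
- by move=> i; case: (split i).
- by move=> i; case: (split i).
rewrite big_split_ord /=; congr (_ + _); apply: eq_bigr => i _.
- by rewrite (unsplitK (inl i)).
- by rewrite (unsplitK (inr i)).
Qed.

Lemma iMp I J a b : I a -> J b -> idealMul I J (a * b).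
Proof. move=> Ha Hb; exists 1%N, (fun _ => a), (fun _ => b); split; [by []|split; first by []].
by rewrite big_ord1. Qed.

Lemma iM_ind I J (Q : A -> Prop) : Q 0 -> (forall x y, Q x -> Q y -> Q (x + y)) ->
  (forall a b, I a -> J b -> Q (a * b)) -> forall x, idealMul I J x -> Q x.
Proof.
move=> Q0 QD QM x [n [a [b [Ha [Hb ->]]]]].
by apply: (big_ind Q) => // i _; apply: QM.
Qed.

Lemma iM_mono I J I' J' : (forall x, I x -> I' x) -> (forall x, J x -> J' x) ->
  forall x, idealMul I J x -> idealMul I' J' x.
Proof. move=> HI HJ; apply: iM_ind; [exact: iM0|exact: iMD|].
by move=> a b Ha Hb; apply: iMp; auto. Qed.

Definition AI J := idealMul (fun _ : A => True) J.

Lemma AIl J b x : AI J x -> AI J (b * x).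
Proof. move=> H; apply: (@iM_ind (fun _ => True) J (fun x => AI J (b * x))) H; first by rewrite mulr0; exact: iM0.
- by move=> x1 y1 H1 H2; rewrite mulrDr; apply: iMD.
by move=> a c _ Hc; rewrite mulrA; apply: iMp.
Qed.

Lemma AIB J x y : AI J x -> AI J y -> AI J (x - y).
Proof. move=> Hx Hy; apply: iMD => //; rewrite -mulN1r; exact: AIl. Qed.

End Aux.

Section Ideals.
Variables (k : fieldType) (A : algType k) (G : A -> Prop).
Hypothesis HG : is_subalg G.
Implicit Types (I J K m P : A -> Prop).

Lemma G1 : G 1. Proof. by case: HG. Qed.
Lemma GB x y : G x -> G y -> G (x - y). Proof. by case: HG => _ H _ _; apply: H. Qed.
Lemma GM x y : G x -> G y -> G (x * y). Proof. by case: HG => _ _ _ H; apply: H. Qed.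
Lemma G0 : G 0. Proof. by rewrite -(subrr 1); apply: GB; apply: G1. Qed.
Lemma GN x : G x -> G (- x). Proof. by move=> Hx; rewrite -sub0r; apply: GB => //; apply: G0. Qed.
Lemma GD x y : G x -> G y -> G (x + y).
Proof. by move=> Hx Hy; rewrite -(opprK y); apply: GB => //; apply: GN. Qed.

Section I.
Variable I : A -> Prop.
Hypothesis HI : is_ideal G I.
Lemma IG x : I x -> G x. Proof. by case: HI => H _ _ _ _; apply: H. Qed.
Lemma I0 : I 0. Proof. by case: HI. Qed.
Lemma IB x y : I x -> I y -> I (x - y). Proof. by case: HI => _ _ H _ _; apply: H. Qed.
Lemma Il g x : G g -> I x -> I (g * x). Proof. by case: HI => _ _ _ H _; apply: H. Qed.
Lemma Ir g x : G g -> I x -> I (x * g). Proof. by case: HI => _ _ _ _ H; apply: H. Qed.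
Lemma IN x : I x -> I (- x). Proof. by move=> Hx; rewrite -sub0r; apply: IB => //; apply: I0. Qed.
Lemma ID x y : I x -> I y -> I (x + y).
Proof. by move=> Hx Hy; rewrite -(opprK y); apply: IB => //; apply: IN. Qed.
End I.

Lemma ideal_G : is_ideal G G.
Proof. split; [by []|exact: G0|exact: GB|exact: GM|by move=> g x Hg Hx; apply: GM]. Qed.

Lemma ideal_mul m P : is_ideal G m -> is_ideal G P -> is_ideal G (idealMul m P).
Proof.
move=> Hm HP; split.
- apply: iM_ind; [exact: G0|exact: GD|by move=> a b Ha Hb; apply: GM; [apply: (IG Hm)|apply: (IG HP)]].
- exact: iM0.
- move=> x y Hx Hy; apply: iMD => //.
  move: Hy; apply: (@iM_ind _ _ m P (fun y => idealMul m P (- y))).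
  + by rewrite oppr0; apply: iM0.
  + by move=> x1 y1 H1 H2; rewrite opprD; apply: iMD.
  + by move=> a b Ha Hb; rewrite -mulNr; apply: iMp => //; apply: IN.
- move=> g x Hg; apply: (@iM_ind _ _ m P (fun y => idealMul m P (g * y))).
  + by rewrite mulr0; apply: iM0.
  + by move=> x1 y1 H1 H2; rewrite mulrDr; apply: iMD.
  + by move=> a b Ha Hb; rewrite mulrA; apply: iMp => //; apply: Il.
- move=> g x Hg; apply: (@iM_ind _ _ m P (fun y => idealMul m P (y * g))).
  + by rewrite mul0r; apply: iM0.
  + by move=> x1 y1 H1 H2; rewrite mulrDl; apply: iMD.
  + by move=> a b Ha Hb; rewrite -mulrA; apply: iMp => //; apply: Ir.
Qed.

Lemma ideal_prod ms : (forall m, List.In m ms -> is_ideal G m) -> is_ideal G (prodIdeal G ms).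
Proof.
elim: ms => [|m ms IH] H /=; first exact: ideal_G.
apply: ideal_mul; first by apply: H; left.
by apply: IH => m' Hm'; apply: H; right.
Qed.

Lemma iM_subr m P : is_ideal G m -> is_ideal G P -> forall x, idealMul m P x -> P x.
Proof. move=> Hm HP; apply: iM_ind; [exact: I0|exact: ID|].
by move=> a b Ha Hb; apply: Il => //; exact: (IG Hm Ha). Qed.

Lemma iM_subl m P : is_ideal G m -> is_ideal G P -> forall x, idealMul m P x -> m x.
Proof. move=> Hm HP; apply: iM_ind; [exact: I0|exact: ID|].
by move=> a b Ha Hb; apply: Ir => //; exact: (IG HP Hb). Qed.

Lemma AI_mono J (J' : A -> Prop) : (forall x, J x -> J' x) -> forall x, AI J x -> AI J' x.
Proof. by move=> H; apply: iM_mono. Qed.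

Lemma AI_mG m x : is_ideal G m -> (AI (idealMul m G) x <-> AI m x).
Proof. move=> Hm; split; apply: AI_mono.
- by apply: iM_subl => //; apply: ideal_G.
- by move=> y Hy; rewrite -(mulr1 y); apply: iMp => //; apply: G1.
Qed.

Lemma AI_G x : AI G x.
Proof. by rewrite -(mulr1 x); apply: iMp => //; apply: G1. Qed.

Definition Com I J := exists i j, I i /\ J j /\ i + j = 1.

Lemma Com_sym I J : Com I J -> Com J I.
Proof. by move=> [i [j [Hi [Hj E]]]]; exists j, i; rewrite addrC. Qed.

Lemma Com_mul I J K : is_ideal G I -> (forall x, J x -> G x) -> (forall x, K x -> G x) ->
  Com I J -> Com I K -> Com I (idealMul J K).
Proof.
move=> HI HJ HK [i [j [Hi [Hj E1]]]] [i' [c [Hi' [Hc E2]]]].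
exists (i * i' + i * c + j * i'), (j * c); split; [|split].
- apply: ID => //; last by apply: Il => //; auto.
  apply: ID => //; apply: Ir => //; [exact: (IG HI Hi')|auto].
- exact: iMp.
- have -> : 1 = (i + j) * (i' + c) by rewrite E1 E2 mulr1.
  by rewrite mulrDl !mulrDr -!addrA; congr (_ + _); rewrite addrC -addrA.
Qed.

End Ideals.

Section Blocks.
Variables (k : fieldType) (A : algType k) (G : A -> Prop)
  (eqv : (A -> Prop) -> (A -> Prop) -> Prop).
Hypothesis HG : is_subalg G.
Hypothesis Heqv : equiv_on_cfs G eqv.
Implicit Types (I J K m P : A -> Prop) (C : (A -> Prop) -> Prop).

Lemma cfs_ideal m : cfs G m -> is_ideal G m.
Proof. by case=> [[]]. Qed.

Lemma block_cfs C m : is_block G eqv C -> C m -> cfs G m.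
Proof. by move=> [m0 [_ H]] /H []. Qed.

Lemma Wset_ideal C n : is_block G eqv C -> Wset G C n -> is_ideal G n.
Proof. move=> HC [ms [Hms ->]]; apply: ideal_prod => // m /Hms Hm.
by apply: cfs_ideal; apply: block_cfs Hm. Qed.

Lemma com_max C C' m m' : is_block G eqv C -> is_block G eqv C' -> C <> C' ->
  C m -> C' m' -> Com m m'.
Proof.
move=> HC HC' Hne Hm Hm'.
have cm := block_cfs HC Hm; have cm' := block_cfs HC' Hm'.
have im := cfs_ideal cm; have im' := cfs_ideal cm'.
apply: NNPP => Hno.
pose J := fun x => exists i j, m i /\ m' j /\ x = i + j.
have HJ : is_ideal G J.
  split.
  - by move=> x [i [j [Hi [Hj ->]]]]; apply: GD => //; [exact: (IG im Hi)|exact: (IG im' Hj)].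
  - by exists 0, 0; split; [exact: (I0 im)|split; [exact: (I0 im')|rewrite addr0]].
  - move=> x y [i [j [Hi [Hj ->]]]] [i' [j' [Hi' [Hj' ->]]]].
    exists (i - i'), (j - j'); split; [exact: (IB im Hi Hi')|split; [exact: (IB im' Hj Hj')|]].
    by rewrite opprD addrACA.
  - move=> g x Hg [i [j [Hi [Hj ->]]]]; exists (g * i), (g * j).
    by split; [exact: (Il im Hg Hi)|split; [exact: (Il im' Hg Hj)|rewrite mulrDr]].
  - move=> g x Hg [i [j [Hi [Hj ->]]]]; exists (i * g), (j * g).
    by split; [exact: (Ir im Hg Hi)|split; [exact: (Ir im' Hg Hj)|rewrite mulrDl]].
case: (cm) => [[_ [g [Gg Ng]] Hmax] _].
have mJ : forall x, m x -> J x by move=> x Hx; exists x, 0; rewrite addr0; split => //; split => //; exact: (I0 im').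
case: (Hmax J HJ mJ) => [HJm | HJG]; last first.
  have : J 1 by apply/HJG; exact: G1.
  by case=> i [j [Hi [Hj E]]]; apply: Hno; exists i, j; split => //; split.
have m'm : forall x, m' x -> m x by move=> x Hx; apply/HJm; exists 0, x; rewrite add0r; split => //; exact: (I0 im).
case: (cm') => [[_ [g' [Gg' Ng']] Hmax'] _].
case: (Hmax' m im m'm) => [Hmm' | HmG]; last by apply: Ng; apply/HmG.
have Em : m = m'.
  by apply: functional_extensionality => x; apply: propositional_extensionality.
subst m'.
apply: Hne.
case: HC => [m0 [cm0 HC]]; case: HC' => [m0' [cm0' HC']].
case: Heqv => Hrefl Hsym Htr.
have [_ e0] := (HC m).1 Hm.
have [_ e0'] := (HC' m).1 Hm'.
apply: functional_extensionality => X; apply: propositional_extensionality.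
rewrite HC HC'; split => -[cX eX]; split => //.
- apply: (Htr _ _ _ cm0' cm0 cX) => //.
  apply: (Htr _ _ _ cm0' cm cm0) => //; exact: Hsym.
- apply: (Htr _ _ _ cm0 cm0' cX) => //.
  apply: (Htr _ _ _ cm0 cm cm0') => //; exact: Hsym.
Qed.

Lemma com_W C C' n n' : is_block G eqv C -> is_block G eqv C' -> C <> C' ->
  Wset G C n -> Wset G C' n' -> Com n n'.
Proof.
move=> HC HC' Hne Wn Wn'.
have In' := Wset_ideal HC' Wn'.
case: Wn' => [ms' [Hms' En']].
have step1 : forall m, C m -> Com m n'.
  move=> m Hm; have im := cfs_ideal (block_cfs HC Hm).
  rewrite En'; elim: ms' Hms' {En'} => [|m1 ms' IH] Hms'.
    by exists 0, 1; split; [exact: (I0 im)|split; [exact: G1|rewrite add0r]].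
  apply: (@Com_mul _ _ G) => //.
  - move=> x Hx; exact: (IG (cfs_ideal (block_cfs HC' (Hms' _ (or_introl erefl)))) Hx).
  - move=> x Hx; refine (IG (ideal_prod HG _) Hx) => m2 H2.
    by apply: cfs_ideal; apply: (block_cfs HC'); apply: Hms'; right.
  - by apply: (com_max HC HC' Hne Hm); apply: Hms'; left.
  - exact: (IH (fun m2 H2 => Hms' m2 (or_intror H2))).
case: Wn => [ms [Hms ->]].
elim: ms Hms => [|m1 ms IH] Hms.
  by exists 1, 0; split; [exact: G1|split; [exact: (I0 In')|rewrite addr0]].
apply: Com_sym; apply: (@Com_mul _ _ G) => //.
- move=> x Hx; exact: (IG (cfs_ideal (block_cfs HC (Hms _ (or_introl erefl)))) Hx).
- move=> x Hx; refine (IG (ideal_prod HG _) Hx) => m2 H2.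
  by apply: cfs_ideal; apply: (block_cfs HC); apply: Hms; right.
- by apply: Com_sym; apply: step1; apply: Hms; left.
- exact: (Com_sym (IH (fun m2 H2 => Hms m2 (or_intror H2)))).
Qed.

End Blocks.

Section RSec.
Variables (k : fieldType) (A : algType k) (G : A -> Prop) (N nc : A -> Prop).
Hypothesis HG : is_subalg G.
Hypothesis N0 : N 0.
Hypothesis ND : forall x y, N x -> N y -> N (x + y).
Hypothesis Nl : forall b x, N x -> N (b * x).
Hypothesis Inc : is_ideal G nc.

Definition R z := exists i j, nc i /\ G j /\ i + j = 1 /\ forall g, G g -> N ((j * g) * z).

Lemma R_N z : N z -> R z.
Proof. move=> Hz; exists 0, 1; split; [exact: (I0 Inc)|split; [exact: G1|split; [by rewrite add0r|]]].
by move=> g _; apply: Nl. Qed.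

Lemma R_D z1 z2 : R z1 -> R z2 -> R (z1 + z2).
Proof.
move=> [i1 [j1 [Hi1 [Hj1 [E1 H1]]]]] [i2 [j2 [Hi2 [Hj2 [E2 H2]]]]].
exists (i1 + j1 * i2), (j1 * j2); split; [|split; [|split]].
- by apply: (ID Inc) => //; apply: (Il Inc).
- exact: GM.
- by rewrite -addrA -mulrDr E2 mulr1.
- move=> g Gg; rewrite mulrDr; apply: ND.
  + by rewrite -(mulrA j1 j2 g); apply: H1; apply: GM.
  + by rewrite -(mulrA j1 j2 g) -(mulrA j1); apply: Nl; apply: H2.
Qed.

Lemma R_mod z z' : N (z - z') -> R z' -> R z.
Proof.
move=> Hzz [i [j [Hi [Hj [E H]]]]]; exists i, j; split => //; split => //; split => // g Gg.
by rewrite -(subrK z' z) mulrDr; apply: ND; [apply: Nl|apply: H].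
Qed.

Lemma R_kill ns z : is_ideal G ns -> Com nc ns -> (forall x, ns x -> N (x * z)) -> R z.
Proof.
move=> Ins [i [j [Hi [Hj E]]]] Hz; exists i, j; split => //; split; first exact: (IG Ins Hj).
by split => // g Gg; apply: Hz; apply: (Ir Ins).
Qed.

Lemma R_final x : R x -> (forall y, nc y -> N (y * x)) -> N x.
Proof.
move=> [i [j [Hi [Hj [E H]]]]] Hx.
rewrite -(mul1r x) -E mulrDl; apply: ND; first exact: Hx.
by rewrite -(mulr1 j); apply: H; apply: G1.
Qed.

End RSec.

Section Key.
Variables (k : fieldType) (A : algType k) (G : A -> Prop)
  (eqv : (A -> Prop) -> (A -> Prop) -> Prop).
Hypothesis HG : is_subalg G.
Hypothesis Heqv : equiv_on_cfs G eqv.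
Hypothesis HHC : HC_block_subalg G eqv.
Implicit Types (I J K m P : A -> Prop) (C : (A -> Prop) -> Prop).

Lemma key B C nc ms x : is_block G eqv B -> (forall m, List.In m ms -> B m) ->
  is_block G eqv C -> Wset G C nc ->
  ~ AI (prodIdeal G ms) x -> (forall y, nc y -> AI (prodIdeal G ms) (y * x)) ->
  exists m, List.In m ms /\ Supp (M := A^o) G (AI m) C.
Proof.
move=> HB Hms HC Wnc; elim: ms Hms x => [|m ms IH] Hms x Hx Hnc.
  by exfalso; apply: Hx; apply: AI_G.
have im : is_ideal G m by apply: cfs_ideal; apply: (block_cfs HB); apply: Hms; left.
have Hms' : forall m0, List.In m0 ms -> B m0 by move=> m0 H0; apply: Hms; right.
have iP' : is_ideal G (prodIdeal G ms).
  by apply: ideal_prod => // m0 H0; apply: cfs_ideal; apply: (block_cfs HB); apply: Hms'.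
have inc : is_ideal G nc by apply: (Wset_ideal HG HC Wnc).
case: (classic (Supp (M := A^o) G (AI m) C)) => [S|nS].
  by exists m; split => //; left.
set P' := prodIdeal G ms.
case: (classic (AI P' x)) => [HxP'|nxP']; last first.
  have [m' [Hm' S]] := IH Hms' x nxP' (fun y Hy => AI_mono (iM_subr im iP') (Hnc y Hy)).
  by exists m'; split => //; right.
exfalso; apply: Hx.
pose N := AI (idealMul m P').
have F1 : forall c y, AI (idealMul m G) c -> P' y -> N (c * y).
  move=> c y Hc Hy; move: Hc.
  apply: (@iM_ind _ _ (fun _ => True) (idealMul m G) (fun c => N (c * y))).
  - by rewrite mul0r; apply: iM0.
  - by move=> c1 c2 H1 H2; rewrite mulrDl; apply: iMD.
  - move=> e w _ Hw; rewrite -mulrA; apply: iMp => //; move: Hw.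
    apply: (@iM_ind _ _ m G (fun w => idealMul m P' (w * y))).
    + by rewrite mul0r; apply: iM0.
    + by move=> c1 c2 H1 H2; rewrite mulrDl; apply: iMD.
    + by move=> mu g Hmu Hg; rewrite -mulrA; apply: iMp => //; apply: (Il iP').
have N0 : N 0 by apply: iM0.
have ND : forall x y, N x -> N y -> N (x + y) by move=> ? ?; apply: iMD.
have Nl : forall b x, N x -> N (b * x) by move=> ? ?; apply: AIl.
apply: (@R_final _ _ G N nc) => //.
move: HxP'; apply: (@iM_ind _ _ (fun _ => True) P' (R G N nc)).
- exact: (@R_N _ _ G N nc).
- by move=> ? ?; apply: (@R_D _ _ G N nc).
move=> b y _ Hy.
have WB : Wset G B (idealMul m G).
  by exists [:: m]; split => // m0 [<-|[]]; apply: Hms; left.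
have [r [Hr Hb]] := HHC HB WB b.
apply: (@R_mod _ _ G N nc _ _ _ (\sum_(p <- r) p.1 * y)) => //.
  by rewrite -mulr_suml -mulrBl; apply: F1.
elim: r Hr {Hb} => [|p r IHr] Hr.
  by rewrite big_nil; apply: (@R_N _ _ G N nc).
rewrite big_cons; apply: (@R_D _ _ G N nc) => //; last by apply: IHr => q Hq; apply: Hr; right.
have [Hp2 Qp] := Hr p (or_introl erefl).
case: (classic (AI (idealMul m G) p.1)) => [Hp1|nHp1].
  by apply: (@R_N _ _ G N nc) => //; apply: F1.
have Hne : C <> p.2.
  move=> E; apply: nS; exists p.1; split.
    by move=> H; apply: nHp1; apply/(AI_mG HG).
  rewrite E; case: Qp => [n0 [Wn0 Hn0]]; exists n0; split => // x0 H0.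
  by apply/(AI_mG HG) => //; apply: Hn0.
case: Qp => [n0 [Wn0 Hn0]].
apply: (@R_kill _ _ G N nc n0) => //.
- exact: (Wset_ideal HG Hp2 Wn0).
- exact: (com_W HG Heqv HC Hp2 Hne Wnc Wn0).
by move=> x0 H0; rewrite mulrA; apply: F1 => //; apply: Hn0.
Qed.

End Key.

Theorem mainTheorem10 (k : fieldType) (A : algType k) (G : A -> Prop)
  (eqv : (A -> Prop) -> (A -> Prop) -> Prop) :
  is_subalg G -> equiv_on_cfs G eqv -> HC_block_subalg G eqv ->
  forall (V : lmodType A) (v : V) (B : (A -> Prop) -> Prop) (ms : seq (A -> Prop)),
    is_block G eqv B -> (forall m, List.In m ms -> B m) ->
    (forall x, prodIdeal G ms x -> x *: v = 0) ->
    forall a : A, exists r : seq (V * ((A -> Prop) -> Prop)),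
      a *: v = \sum_(p <- r) p.1 /\
      forall p, List.In p r ->
        [/\ is_block G eqv p.2,
            QPart G (fun w : V => w = 0) p.2 p.1 &
            exists m, List.In m ms /\
              Supp (M := A^o) G (idealMul (fun _ => True) m) p.2].
Proof.
move=> HG Heqv HHC V v B ms HB Hms Hv a.
set P := prodIdeal G ms.
have WB : Wset G B P by exists ms.
have [r [Hr Ha]] := HHC B HB P WB a.
have kill : forall z, AI P z -> z *: v = 0.
  apply: (@iM_ind _ _ (fun _ => True) P (fun z => z *: v = 0)).
  - by rewrite scale0r.
  - by move=> x y Hx Hy; rewrite scalerDl Hx Hy addr0.
  - by move=> b y _ Hy; rewrite -scalerA Hv // scaler0.
have build : forall L : seq (A * ((A -> Prop) -> Prop)),
    (forall p, List.In p L -> is_block G eqv p.2 /\ QPart (M := A^o) G (AI P) p.2 p.1) ->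
    exists r' : seq (V * ((A -> Prop) -> Prop)),
      (\sum_(p <- L) p.1) *: v = \sum_(p <- r') p.1 /\
      forall p, List.In p r' ->
        [/\ is_block G eqv p.2,
            QPart G (fun w : V => w = 0) p.2 p.1 &
            exists m, List.In m ms /\
              Supp (M := A^o) G (idealMul (fun _ => True) m) p.2].
  elim=> [|q L IH] HL.
    by exists [::]; split => //; rewrite !big_nil scale0r.
  have [r' [E Hr']] := IH (fun p Hp => HL p (or_intror Hp)).
  have [Hq2 [n0 [Wn0 Hn0]]] := HL q (or_introl erefl).
  case: (classic (AI P q.1)) => [Hq1|nHq1].
    by exists r'; split => //; rewrite big_cons scalerDl kill // add0r; exact: E.
  exists ((q.1 *: v, q.2) :: r'); split.
    by rewrite !big_cons scalerDl E.
  move=> p [<-|Hp]; last exact: Hr'.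
  split => //.
    exists n0; split => // x Hx; rewrite /= scalerA; apply: kill; exact: Hn0.
  apply: (key HG Heqv HHC HB Hms Hq2 Wn0 nHq1).
  by move=> y Hy; apply: Hn0.
have [r' [E Hr']] := build r Hr.
exists r'; split => //.
rewrite -(subrK (\sum_(p <- r) p.1 : A) a) scalerDl kill // add0r; exact: E.
Qed.
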